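(* Let $1\le p<\infty$ and let $d_{w,p}$ be a Lorentz sequence space. The formal identity operator $j\colon\ell_p\to d_{w,p}$ is finitely strictly singular.
   Context: Let $1\le p<\infty$ and let $w=(w_n)$ be a real sequence with $w_1=1$, $w_n\downarrow 0$ and $\sum_n w_n=\infty$. The Lorentz sequence space $d_{w,p}$ is the Banach space of all $x=(x_n)\in c_0$ with $\|x\|_{d_{w,p}}=\big(\sum_{n}w_n (x^*_n)^p\big)^{1/p}<\infty$, where $(x^*_n)$ is the non-increasing rearrangement of $(|x_n|)$. The formal identity $j\colon\ell_p\to d_{w,p}$ maps the $n$-th unit vector of $\ell_p$ to the $n$-th unit vector of $d_{w,p}$. An operator $T\colon X\to Y$ is finitely strictly singular if for every $\varepsilon>0$ there is $N\in\mathbb N$ such that every subspace $Z\subseteq X$ with $\dim Z\ge N$ contains $z$ with $\|Tz\|<\varepsilon\|z\|$. *)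

(* Defs.v *)
From HB Require Import structures.
From mathcomp Require Import all_boot all_order all_algebra.
From mathcomp Require Import all_classical all_reals all_analysis.
Set Implicit Arguments. Unset Strict Implicit. Unset Printing Implicit Defensive.
Import Order.TTheory GRing.Theory Num.Theory numFieldNormedType.Exports.
Local Open Scope classical_set_scope.
Local Open Scope ring_scope.

(* Sequences are indexed from 0: x 0, x 1, ... (paper: x_1, x_2, ...). *)

Section LorentzDefs.
Variable R : realType.

Definition in_lp (p : R) (x : nat -> R) : Prop :=
  cvgn (series (fun k => `|x k| `^ p)).

Definition lp_norm (p : R) (x : nat -> R) : R :=
  (limn (series (fun k => `|x k| `^ p))) `^ (p^-1).

Definition in_c0 (x : nat -> R) : Prop := x @ \oo --> (0 : R).

(* non-increasing rearrangement of (|x_k|), 0-indexed: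
   x*_n = inf over sets A of at most n indices of sup_{k not in A} |x k| *)
Definition rearr (x : nat -> R) (n : nat) : R :=
  inf [set r : R | exists A : seq nat, (size A <= n)%N /\
        r = sup [set `|x k| | k in [set k : nat | k \notin A]]].

Definition in_dwp (w : nat -> R) (p : R) (x : nat -> R) : Prop :=
  in_c0 x /\ cvgn (series (fun n => w n * rearr x n `^ p)).

Definition dwp_norm (w : nat -> R) (p : R) (x : nat -> R) : R :=
  (limn (series (fun n => w n * rearr x n `^ p))) `^ (p^-1).

Definition jmap (x : nat -> R) : nat -> R := x.

Definition lp_subspace (p : R) (Z : set (nat -> R)) : Prop :=
  Z `<=` in_lp p /\ Z (fun _ => 0) /\
  (forall (a b : R) (x y : nat -> R), Z x -> Z y ->
     Z (fun k => a * x k + b * y k)).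

Definition lin_indep (N : nat) (v : 'I_N -> nat -> R) : Prop :=
  forall c : 'I_N -> R, (forall k, \sum_(i < N) c i * v i k = 0) ->
    forall i, c i = 0.

Definition dim_ge (Z : set (nat -> R)) (N : nat) : Prop :=
  exists v : 'I_N -> nat -> R, (forall i, Z (v i)) /\ lin_indep v.

Definition lorentz_weight (w : nat -> R) : Prop :=
  w 0%N = 1 /\ (forall n, w n.+1 <= w n) /\ w @ \oo --> (0 : R) /\
  ~ cvgn (series w).

End LorentzDefs.

(* Main.v *)
Require Import Defs.
From HB Require Import structures.
From mathcomp Require Import all_boot all_order all_algebra.
From mathcomp Require Import all_classical all_reals all_analysis.
Import Order.TTheory GRing.Theory Num.Theory numFieldNormedType.Exports.
Local Open Scope classical_set_scope.
Local Open Scope ring_scope.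

From mathcomp Require Import ring lra.
Set Implicit Arguments. Unset Strict Implicit.
Section Aux.
Variable R : realType.

Lemma fresh_nat (A : seq nat) : exists k, forall j, (k <= j)%N -> j \notin A.
Proof.
elim: A => [|a A [k Hk]]; first by exists 0%N.
exists (maxn k a.+1) => j Hj; rewrite in_cons negb_or; apply/andP; split.
  by apply/eqP => E; move: Hj; rewrite E geq_max ltnn andbF.
by apply: Hk; move: Hj; rewrite geq_max => /andP[].
Qed.

Lemma argmin_fin (f : nat -> R) (P : nat -> Prop) (B : nat) :
  (exists k, (k < B)%N /\ P k) ->
  exists k1, P k1 /\ (k1 < B)%N /\ forall k, (k < B)%N -> P k -> f k1 <= f k.
Proof.
elim: B => [[k [//]]|B IH [k0 [Hk0 Pk0]]].
have [[k [Hk Pk]]|Hn] := pselect (exists k, (k < B)%N /\ P k).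
  have [k1 [Pk1 [Hk1 Hmin]]] := IH (ex_intro _ k (conj Hk Pk)).
  have [PB|nPB] := pselect (P B).
    have [le|lt] := leP (f k1) (f B).
      exists k1; split => //; split; first by apply: ltnW.
      move=> j; rewrite ltnS leq_eqVlt => /orP[/eqP->//|]; exact: Hmin.
    exists B; split => //; split => // j; rewrite ltnS leq_eqVlt => /orP[/eqP->//|hj Pj].
    by apply: le_trans (ltW lt) (Hmin _ hj Pj).
  exists k1; split => //; split; first by apply: ltnW.
  move=> j; rewrite ltnS leq_eqVlt => /orP[/eqP->//|]; exact: Hmin.
have PB : P B.
  move: Hk0; rewrite ltnS leq_eqVlt => /orP[/eqP<-//|hk0].
  by exfalso; apply: Hn; exists k0.
exists B; split => //; split => // j; rewrite ltnS leq_eqVlt => /orP[/eqP->//|hj Pj].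
by exfalso; apply: Hn; exists j.
Qed.

Lemma argmin_ev (f : nat -> R) (P : nat -> Prop) k0 J :
  P k0 -> (forall k, (J <= k)%N -> P k -> f k0 <= f k) ->
  exists k1, P k1 /\ forall k, P k -> f k1 <= f k.
Proof.
move=> Pk0 HJ.
have [k1 [Pk1 [Hk1 Hmin]]] := @argmin_fin f P (maxn J k0.+1)
  (ex_intro _ k0 (conj (leq_maxr _ _) Pk0)).
exists k1; split => // k Pk.
have [lt|ge] := ltnP k (maxn J k0.+1); first exact: Hmin.
apply: le_trans (Hmin k0 (leq_maxr _ _) Pk0) (HJ k _ Pk).
by move: ge; rewrite geq_max => /andP[].
Qed.

Definition c0' (x : nat -> R) := forall c, 0 < c -> exists J, forall k, (J <= k)%N -> `|x k| < c.

Lemma lp_c0 (p : R) x : 0 < p -> in_lp p x -> c0' x.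
Proof.
move=> p0 /cvg_series_cvg_0 H c c0.
have := cvgr_lt _ H _ (powR_gt0 p c0).
move=> [J _ HJ]; exists J => k /HJ /= hk.
rewrite ltNge; apply/negP => le.
have := ge0_ler_powR (ltW p0) _ _ le; rewrite !nnegrE ltW // normr_ge0 => /(_ isT isT).
by rewrite leNgt hk.
Qed.

Lemma argmax_c0 (x : nat -> R) (A : seq nat) : c0' x ->
  exists k, k \notin A /\ forall j, j \notin A -> `|x j| <= `|x k|.
Proof.
move=> hx.
have [[j0 [Hj0 Pos]]|Hn] := pselect (exists j, j \notin A /\ 0 < `|x j|).
  have [J HJ] := hx _ Pos.
  have [k1 [Pk1 Hmin]] : exists k1, k1 \notin A /\ forall k, k \notin A -> - `|x k1| <= - `|x k|.
    apply: (@argmin_ev (fun j => - `|x j|) (fun j => j \notin A) j0 J Hj0).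
    by move=> k hk _; rewrite lerN2 ltW // HJ.
  by exists k1; split => // j /Hmin; rewrite lerN2.
have [k Hk] := fresh_nat A.
exists k; split; first exact: Hk.
move=> j hj; apply: le_trans (normr_ge0 (x k)).
by rewrite leNgt; apply/negP => h; apply: Hn; exists j.
Qed.


Definition SA (x : nat -> R) (A : seq nat) : set R :=
  [set `|x k| | k in [set k : nat | k \notin A]].

Lemma rearrE (x : nat -> R) n : rearr x n =
  inf [set r : R | exists A : seq nat, (size A <= n)%N /\ r = sup (SA x A)].
Proof. by []. Qed.

Lemma SA_ne (x : nat -> R) A : SA x A !=set0.
Proof. have [k Hk] := fresh_nat A; by exists `|x k|; exists k => //; apply: Hk. Qed.

Lemma supA_le (x : nat -> R) A k : k \notin A -> (forall j, j \notin A -> `|x j| <= `|x k|) ->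
  sup (SA x A) <= `|x k|.
Proof. move=> hk H; apply: ge_sup; first exact: SA_ne. by move=> r [j hj <-]; apply: H. Qed.

Lemma supA_ge (x : nat -> R) (M : R) A : (forall k, `|x k| <= M) -> 0 <= sup (SA x A).
Proof.
move=> hb; have [k Hk] := fresh_nat A.
apply: le_trans (normr_ge0 (x k)) _; apply: ub_le_sup.
  by exists M => r [j _ <-].
by exists k => //; apply: Hk.
Qed.

Lemma rearr_ge0 (x : nat -> R) (M : R) n : (forall k, `|x k| <= M) -> 0 <= rearr x n.
Proof.
move=> hb; rewrite rearrE; apply: lb_le_inf.
  by exists (sup (SA x [::])); exists [::].
by move=> r [A [_ ->]]; apply: supA_ge hb.
Qed.

Lemma rearr_le (x : nat -> R) (M : R) n A : (forall k, `|x k| <= M) -> (size A <= n)%N ->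
  rearr x n <= sup (SA x A).
Proof.
move=> hb hA; rewrite rearrE; apply: ge_inf; last by exists A.
by exists 0 => r [B [_ ->]]; apply: supA_ge hb.
Qed.

Lemma rearr_leM (x : nat -> R) (M : R) n : (forall k, `|x k| <= M) -> rearr x n <= M.
Proof.
move=> hb; apply: (le_trans (@rearr_le x (M : R) n [::] hb isT)).
apply: ge_sup; first exact: SA_ne. by move=> r [j _ <-].
Qed.

Lemma greedy (x : nat -> R) (M : R) (p : R) : (forall k, `|x k| <= M) -> c0' x -> 0 <= p ->
  forall m, exists A, size A = m /\ uniq A /\
    \sum_(0 <= n < m) rearr x n `^ p <= \sum_(k <- A) `|x k| `^ p.
Proof.
move=> hb hx p0; elim => [|m [A [sA [uA HA]]]].
  by exists [::]; rewrite !big_nil.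
have [k [hk Hk]] := argmax_c0 A hx.
exists (k :: A); split; first by rewrite /= sA.
split; first by rewrite /= hk uA.
rewrite big_nat_recr //= big_cons addrC lerD //.
apply: ge0_ler_powR => //; rewrite ?nnegrE ?normr_ge0 ?(rearr_ge0 m hb) //.
apply: (le_trans (@rearr_le x M m A hb (eq_leq sA))).
exact: supA_le.
Qed.

Lemma sum_uniq_le (f : nat -> R) A L : (forall k, 0 <= f k) -> uniq A ->
  (forall n, series f n <= L) -> \sum_(k <- A) f k <= L.
Proof.
move=> f0 uA HL; have [B HB] := fresh_nat A.
apply: le_trans (HL B); rewrite /series /=.
have pe : perm_eq A [seq k <- index_iota 0 B | k \in A].
  apply: uniq_perm => //; first by rewrite filter_uniq // iota_uniq.
  move=> k; rewrite mem_filter; case kA: (k \in A) => //=.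
  rewrite mem_index_iota leq0n /=; case: ltnP => // /HB; by rewrite kA.
rewrite (perm_big _ pe) big_filter big_mkcond /=.
by apply: ler_sum => k _; case: ifP.
Qed.

Lemma sum_const_seq (f : nat -> R) A c : (forall s, s \in A -> f s = c) ->
  \sum_(s <- A) f s = (size A)%:R * c.
Proof.
elim: A => [|a A IH] H; first by rewrite big_nil mul0r.
rewrite big_cons IH ?H ?mem_head // => [|s hs]; last by apply: H; rewrite in_cons hs orbT.
by rewrite /= -addn1 natrD mulrDl mul1r addrC.
Qed.

End Aux.
Section Sub.
Variable R : realType.

Lemma Z_comb (p : R) (Z : set (nat -> R)) : lp_subspace p Z ->
  forall n (F : 'I_n -> nat -> R) (c : 'I_n -> R), (forall i, Z (F i)) ->
  Z (fun k => \sum_(i < n) c i * F i k).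
Proof.
move=> [_ [Z0 Zl]]; elim => [|n IH] F c HF.
  have -> : (fun k => \sum_(i < 0) c i * F i k) = (fun _ => 0).
    by apply: funext => k; rewrite big_ord0.
  exact: Z0.
have -> : (fun k => \sum_(i < n.+1) c i * F i k) =
  (fun k => 1 * (\sum_(i < n) c (widen_ord (leqnSn n) i) * F (widen_ord (leqnSn n) i) k)
     + c ord_max * F ord_max k).
  by apply: funext => k; rewrite big_ord_recr /= mul1r.
by apply: Zl => //; apply: IH.
Qed.

Lemma exists_vanish (p : R) (Z : set (nat -> R)) N (v : 'I_N -> nat -> R) :
  lp_subspace p Z -> (forall i, Z (v i)) -> lin_indep v ->
  forall S : seq nat, (size S < N)%N ->
  exists y, Z y /\ (exists k, y k != 0) /\ forall s, s \in S -> y s = 0.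
Proof.
move=> hZ hv li S hS.
pose A : 'M[R]_(N, size S) := \matrix_(i, l) v i (nth 0%N S l).
have rk : (0 < \rank (kermx A))%N.
  rewrite mxrank_ker subn_gt0; exact: leq_ltn_trans (rank_leq_col A) hS.
have [i0 Hi0] : exists i0, row i0 (kermx A) != 0.
  have [//|H] := pselect (exists i0, row i0 (kermx A) != 0); move: rk;
  rewrite lt0n mxrank_eq0 => /negP rk; exfalso; apply: rk.
  apply/eqP/row_matrixP => i; rewrite row0.
  have [//|h] := pselect (row i (kermx A) = 0); exfalso; apply: H; exists i; exact/eqP.
pose c i := kermx A i0 i.
exists (fun k => \sum_(i < N) c i * v i k); split; first by apply: (Z_comb hZ).
split.
  have [//|H] := pselect (exists k, \sum_(i < N) c i * v i k != 0).
  have H0 : forall k, \sum_(i < N) c i * v i k = 0.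
    by move=> k; have [//|h] := pselect (\sum_(i < N) c i * v i k = 0); exfalso; apply: H; exists k; apply/eqP.
  move: Hi0; rewrite (_ : row i0 (kermx A) = 0) ?eqxx //.
  apply/rowP => j; rewrite mxE; have := li c H0 j; rewrite /c => ->; by rewrite mxE.
move=> s hs.
have hl : (index s S < size S)%N by rewrite index_mem.
have := congr1 (fun M : 'M[R]_(N, size S) => M i0 (Ordinal hl)) (mulmx_ker A).
move=> /eqP; rewrite mxE [X in _ == X]mxE => /eqP H; rewrite -[RHS]H.
apply: eq_bigr => i _; rewrite /c; congr (_ * _); by rewrite /A mxE /= nth_index.
Qed.

End Sub.
Section Peak.
Variable R : realType.

Lemma sg_mul_le (a b M : R) : `|b| <= M -> `|Num.sg a * b| <= M.
Proof.
move=> hb; rewrite normrM normr_sg; case: (a != 0) => /=; first by rewrite mul1r.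
by rewrite mul0r; apply: le_trans (normr_ge0 b) hb.
Qed.

Lemma T_ge0 (a b M : R) : `|b| <= M -> 0 <= (M - Num.sg a * b) / `|a|.
Proof.
move=> hb; apply: divr_ge0 => //; rewrite subr_ge0.
exact: ler_normlW (sg_mul_le a hb).
Qed.

Lemma sg_id (a b : R) : a != 0 -> `|b| = `|Num.sg a * b|.
Proof. by move=> a0; rewrite normrM normr_sg a0 mul1r. Qed.

Lemma key_le (a b M t : R) : `|b| <= M -> a != 0 -> 0 <= t ->
  t * `|a| <= M - Num.sg a * b -> `|b + t * a| <= M.
Proof.
move=> hb a0 t0 ht; rewrite (sg_id _ a0) mulrDr mulrCA -normrEsg.
have := sg_mul_le a hb; rewrite !ler_norml => /andP[h1 h2].
apply/andP; split.
  by apply: le_trans h1 _; rewrite lerDl mulr_ge0.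
by rewrite -lerBrDl.
Qed.

Lemma key_eq (a b M : R) : a != 0 ->
  `|b + ((M - Num.sg a * b) / `|a|) * a| = `|M|.
Proof.
move=> a0; rewrite (sg_id _ a0) mulrDr mulrCA -normrEsg.
by rewrite divfK ?normr_eq0 // addrC subrK.
Qed.

Lemma peak (p : R) (Z : set (nat -> R)) N (v : 'I_N -> nat -> R) :
  0 < p -> lp_subspace p Z -> (forall i, Z (v i)) -> lin_indep v ->
  forall j, (0 < j <= N)%N ->
  exists z S (M : R), Z z /\ 0 < M /\ size S = j /\ uniq S /\
    (forall s, s \in S -> `|z s| = M) /\ (forall k, `|z k| <= M).
Proof.
move=> p0 hZ hv li.
have c0Z : forall z, Z z -> c0' z by move=> z /(hZ.1); exact: lp_c0.
elim => [//|j IH] /andP[_ hjN].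
case: j IH hjN => [_ h1N|j IH hjN].
  have [y [Zy [[k0 hk0] _]]] := @exists_vanish R p Z N v hZ hv li [::] h1N.
  have [k [_ Hk]] := argmax_c0 [::] (c0Z _ Zy).
  exists y, [:: k], `|y k|; split => //; split.
    by apply: lt_le_trans (Hk k0 isT); rewrite normr_gt0.
  split => //; split => //; split; first by move=> s; rewrite inE => /eqP ->.
  by move=> k1; apply: Hk.
have [z [S [M [Zz [M0 [sS [uS [HS Hb]]]]]]]] := IH (ltnW hjN).
have hSN : (size S < N)%N by rewrite sS.
have [y [Zy [[k0 hk0] yS]]] := @exists_vanish R p Z N v hZ hv li S hSN.
pose T k := (M - Num.sg (y k) * z k) / `|y k|.
have T0 : 0 <= T k0 by apply: T_ge0.
have [J1 HJ1] := c0Z _ Zz (M / 2) (divr_gt0 M0 (ltr0Sn _ 1)).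
have e0 : 0 < M / (2 * (T k0 + 1)).
  by apply: divr_gt0 => //; apply: mulr_gt0 => //; apply: ltr_wpDl.
have [J2 HJ2] := c0Z _ Zy _ e0.
have [k1 [Pk1 Hmin]] : exists k1, y k1 != 0 /\ forall k, y k != 0 -> T k1 <= T k.
  apply: (@argmin_ev _ T (fun k => y k != 0) k0 (maxn J1 J2) hk0).
  move=> k; rewrite geq_max => /andP[hk1 hk2] yk.
  rewrite /T ler_pdivlMr ?normr_gt0 //.
  have hz := HJ1 k hk1; have hy := HJ2 k hk2.
  have h1 : T k0 * `|y k| <= M / 2.
    apply: le_trans (_ : (T k0 + 1) * `|y k| <= _).
      by rewrite ler_wpM2r // lerDl.
    rewrite -ler_pdivlMl; last by apply: ltr_wpDl.
    apply: ltW; apply: lt_le_trans hy _.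
    have -> : M / (2 * (T k0 + 1)) = (T k0 + 1)^-1 * (M / 2) by rewrite invfM; ring.
    exact: lexx.
  apply: le_trans h1 _.
  have := ler_normlW (sg_mul_le (y k) (ltW hz)) => h2.
  lra.
pose t := T k1.
have t0 : 0 <= t by apply: T_ge0.
exists (fun k => 1 * z k + t * y k), (k1 :: S), M.
split; first by apply: hZ.2.2.
split => //.
have k1S : k1 \notin S by apply/negP => /yS h; move: Pk1; rewrite h eqxx.
split; first by rewrite /= sS.
split; first by rewrite /= k1S uS.
split.
  move=> s; rewrite inE => /orP[/eqP ->|hs].
    by rewrite mul1r /t /T key_eq // ger0_norm // ltW.
  by rewrite yS // mulr0 addr0 mul1r HS.
move=> k; rewrite mul1r.
have [yk|yk] := eqVneq (y k) 0; first by rewrite yk mulr0 addr0.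
apply: key_le => //.
by rewrite -ler_pdivlMr ?normr_gt0 //; apply: Hmin.
Qed.

End Peak.
Unset Implicit Arguments.
Lemma count_lt (R : realType) K m : \sum_(0 <= n < m) (((n < K)%N)%:R : R) = (minn m K)%:R.
Proof.
elim: m => [|m IH]; first by rewrite big_nil min0n.
rewrite big_nat_recr //= IH.
case: (ltnP m K) => h.
  by rewrite (minn_idPl h) -natrD addn1.
by rewrite (minn_idPr (leqW h)) addr0.
Qed.

Lemma lim_bound (R : realType) (g : nat -> R) (B : R) :
  (forall n, 0 <= g n) -> (forall m, series g m <= B) ->
  0 <= limn (series g) /\ limn (series g) <= B.
Proof.
move=> g0 hB.
have nd : nondecreasing_seq (series g).
  by move=> a b hab; apply: (@nondecreasing_series _ g xpredT 0%N) => // n _ _.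
have ub : has_ubound (range (series g)) by exists B => r [m _ <-].
have := nondecreasing_cvgn nd ub => H.
rewrite (cvg_lim _ H) //.
split.
  apply: le_trans (_ : series g 0 <= _); first by rewrite /series /= big_nil.
  by apply: ub_le_sup => //; exists 0%N.
by apply: ge_sup; [exists (series g 0); exists 0%N | move=> r [m _ <-]].
Qed.

Theorem theorem4p3 (R : realType) (p : R) (w : nat -> R) :
  1 <= p -> lorentz_weight w ->
  forall eps : R, 0 < eps ->
  exists N : nat, forall Z : set (nat -> R),
    lp_subspace p Z -> dim_ge Z N ->
    exists z, Z z /\ dwp_norm w p (jmap z) < eps * lp_norm p z.
Proof.
move=> hp [w0 [wdec [wcvg wdiv]]] eps eps0.
have p0 : 0 < p by apply: lt_le_trans hp; rewrite ltr01.
have whom := (nonincreasing_seqP w).1 wdec.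
have w_ge0 : forall n, 0 <= w n.
  move=> n; have := @nonincreasing_cvgn_ge _ w whom (cvgP _ wcvg) n.
  by rewrite (cvg_lim _ wcvg).
have w_le1 : forall n, w n <= 1 by move=> n; rewrite -w0; apply: whom.
pose e := eps `^ p.
have e0 : 0 < e by apply: powR_gt0.
have [K _ HK] := cvgr_lt _ wcvg _ (divr_gt0 e0 (ltr0Sn _ 1)).
have wK : w K < e / 2 by apply: HK => /=.
pose N := (Num.Def.truncn (2 * K%:R / e)).+1.
exists N => Z hZ [v [hv li]].
have hN : (0 < N <= N)%N by rewrite /N ltn0Sn leqnn.
have [z [S [M [Zz [M0 [sS [uS [HS Hb]]]]]]]] := peak p0 hZ hv li hN.
exists z; split => //.
pose f k := `|z k| `^ p.
have f0 : forall k, 0 <= f k by move=> k; apply: powR_ge0.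
have cz : cvgn (series f) := hZ.1 z Zz.
pose L := limn (series f).
have ndf : nondecreasing_seq (series f).
  by move=> a b hab; apply: (@nondecreasing_series _ f xpredT 0%N) => // n _ _.
have HL : forall n, series f n <= L by move=> n; apply: nondecreasing_cvgn_le.
have NM : N%:R * M `^ p <= L.
  rewrite -sS -(@sum_const_seq R f S (M `^ p)); last by move=> s hs; rewrite /f HS.
  exact: sum_uniq_le.
have Mp0 : 0 < M `^ p by apply: powR_gt0.
have L0 : 0 < L by apply: lt_le_trans NM; rewrite mulr_gt0 // ltr0n.
have c0z : c0' z by apply: lp_c0 p0 (hZ.1 z Zz).
pose g n := w n * rearr z n `^ p.
pose B := K%:R * M `^ p + w K * L.
have HB : forall m, series g m <= B.
  move=> m; have [A [_ [uA HA]]] := greedy Hb c0z (ltW p0) m.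
  have HA' := le_trans HA (sum_uniq_le f0 uA HL).
  apply: le_trans (_ : \sum_(0 <= n < m) ((((n < K)%N)%:R : R) * M `^ p + w K * rearr z n `^ p) <= _).
    apply: ler_sum => n _; rewrite /g.
    have r0 : 0 <= rearr z n `^ p by apply: powR_ge0.
    case: (ltnP n K) => hn.
      rewrite mul1r; apply: le_trans (_ : rearr z n `^ p <= _).
        by rewrite -[leRHS]mul1r ler_wpM2r.
      apply: le_trans (_ : M `^ p <= _); last by rewrite lerDl mulr_ge0.
      apply: ge0_ler_powR; rewrite ?nnegrE ?(ltW M0) ?(rearr_ge0 n Hb) //.
      by apply: ltW.
      exact: (@rearr_leM R z M n Hb).
    by rewrite mul0r add0r ler_wpM2r // whom.
  rewrite big_split /= -mulr_suml -mulr_sumr count_lt.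
  apply: lerD; last by apply: ler_wpM2l.
  by rewrite ler_wpM2r ?(ltW Mp0) // ler_nat geq_minr.
have g0 : forall n, 0 <= g n by move=> n; apply: mulr_ge0 => //; apply: powR_ge0.
have [D0 DB] := @lim_bound R g B g0 HB.
have BeL : B < e * L.
  have hKN : K%:R / N%:R < e / 2.
    rewrite ltr_pdivrMr ?ltr0n //.
    have := truncnS_gt (2 * K%:R / e); rewrite -/N => h.
    rewrite mulrC -ltr_pdivrMr //; last by rewrite divr_gt0.
    have -> : K%:R / (e / 2) = 2 * K%:R / e by field; rewrite gt_eqF.
    exact: h.
  have h1 : K%:R * M `^ p <= K%:R / N%:R * L.
    apply: le_trans (_ : K%:R / N%:R * (N%:R * M `^ p) <= _); last first.
      by apply: ler_wpM2l => //; rewrite divr_ge0.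
    by rewrite mulrA divfK // pnatr_eq0.
  have h2 : K%:R / N%:R * L <= e / 2 * L by rewrite ler_wpM2r // ltW.
  have h3 : w K * L < e / 2 * L by rewrite ltr_pM2r.
  rewrite /B; lra.
rewrite /dwp_norm /lp_norm /jmap -/g -/f -/L.
have pi0 : 0 < p^-1 by rewrite invr_gt0.
apply: (@lt_le_trans _ _ ((e * L) `^ p^-1)).
  apply: gt0_ltr_powR => //; rewrite ?nnegrE //; last by apply: le_lt_trans BeL.
  by rewrite mulr_ge0 // ltW.
rewrite powRM ?(ltW e0) ?(ltW L0) // /e -powRrM mulfV ?gt_eqF // powRr1 ?(ltW eps0) //.
Qed.
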